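(* Let $n\ge3$ be odd. Then $h(n)=\frac{1}{2n}\cot\frac{\pi}{2n}$, and moreover $h(n)=\operatorname{Im}\lambda_{(n-1)/2}(n)$, where $\lambda_k(n)=\frac1n\big(k-\sum_{j=1}^k e^{-2\pi\mathrm i j/n}\big)$.
   Context: A standardized Laplacian matrix of order $n$ is a real $n\times n$ matrix whose row sums are all $0$ and whose off-diagonal entries are nonpositive with absolute value at most $1/n$. $h(n)$ is the supremum of $\operatorname{Im}\lambda$ over all eigenvalues $\lambda$ of all standardized Laplacian matrices of order $n$. *)

(* Defs.v *)
From Stdlib Require Import Reals Lra Lia.
Open Scope R_scope.

Fixpoint rsum (n : nat) (f : nat -> R) : R :=
  match n with
  | O => 0
  | S k => rsum k f + f k
  end.

(* A real n x n matrix is represented by M : nat -> nat -> R, only the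
   entries M i j with i, j < n being relevant. *)
Definition std_laplacian (n : nat) (M : nat -> nat -> R) : Prop :=
  (forall i, (i < n)%nat -> rsum n (fun j => M i j) = 0) /\
  (forall i j, (i < n)%nat -> (j < n)%nat -> i <> j ->
      M i j <= 0 /\ Rabs (M i j) <= 1 / INR n).

(* a + b i is an eigenvalue of the real matrix M: there is a nonzero complex
   vector v = x + i y with M v = (a + b i) v, written in real/imaginary parts. *)
Definition is_eigenvalue (n : nat) (M : nat -> nat -> R) (a b : R) : Prop :=
  exists x y : nat -> R,
    (exists i, (i < n)%nat /\ (x i <> 0 \/ y i <> 0)) /\
    forall i, (i < n)%nat ->
      rsum n (fun j => M i j * x j) = a * x i - b * y i /\
      rsum n (fun j => M i j * y j) = b * x i + a * y i.

Definition Im_spectra (n : nat) (t : R) : Prop :=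
  exists M a, std_laplacian n M /\ is_eigenvalue n M a t.

(* lambda_k(n) = (1/n) (k - sum_{j=1}^k exp(-2 pi i j / n)), real and imaginary parts. *)
Definition lambda_re (k n : nat) : R :=
  / INR n * (INR k - rsum k (fun j => cos (2 * PI * INR (S j) / INR n))).
Definition lambda_im (k n : nat) : R :=
  / INR n * rsum k (fun j => sin (2 * PI * INR (S j) / INR n)).

Definition cot (x : R) : R := cos x / sin x.

(* Main.v *)
Require Import Defs.
From Stdlib Require Import Reals Lra Lia List Arith Permutation Sorted Mergesort Orders.
Open Scope R_scope.


Lemma rsum_ext n f g : (forall i, (i < n)%nat -> f i = g i) -> rsum n f = rsum n g.
Proof. induction n; intros H; simpl; auto. rewrite IHn by (intros; apply H; lia). rewrite H by lia; auto. Qed.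
Lemma rsum_plus n f g : rsum n (fun i => f i + g i) = rsum n f + rsum n g.
Proof. induction n; simpl; lra. Qed.
Lemma rsum_minus n f g : rsum n (fun i => f i - g i) = rsum n f - rsum n g.
Proof. induction n; simpl; lra. Qed.
Lemma rsum_scal n c f : rsum n (fun i => c * f i) = c * rsum n f.
Proof. induction n; simpl; [lra|]. rewrite IHn; lra. Qed.
Lemma rsum_le n f g : (forall i, (i < n)%nat -> f i <= g i) -> rsum n f <= rsum n g.
Proof. induction n; intros H; simpl; [lra|]. assert (H1 := H n ltac:(lia)). assert (rsum n f <= rsum n g) by (apply IHn; intros; apply H; lia). lra. Qed.
Lemma rsum_zero n : rsum n (fun _ => 0) = 0.
Proof. induction n; simpl; lra. Qed.
Lemma rsum_shift n f : rsum (S n) f = f 0%nat + rsum n (fun i => f (S i)).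
Proof. induction n; simpl in *; [lra|]. rewrite IHn; lra. Qed.
Lemma rsum_tele n g : rsum n (fun i => g (S i) - g i) = g n - g 0%nat.
Proof. induction n; simpl; [lra|]. rewrite IHn; lra. Qed.
Lemma rsum_nonneg n f : (forall i, (i < n)%nat -> 0 <= f i) -> 0 <= rsum n f.
Proof. intros H. rewrite <- (rsum_zero n). apply rsum_le; auto. Qed.
Lemma rsum_const n c : rsum n (fun _ => c) = INR n * c.
Proof. induction n; simpl rsum; [simpl; lra|]. rewrite IHn, S_INR; lra. Qed.

Lemma rsum_pair n f :
  rsum n (fun i => rsum n (fun j => f i j)) =
  rsum n (fun i => f i i + rsum i (fun j => f i j + f j i)).
Proof.
  induction n; simpl; [lra|].
  rewrite rsum_plus, IHn, rsum_plus, (rsum_plus n (fun j => f n j) (fun j => f j n)). lra.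
Qed.

Lemma sbp_gen (u p q : nat -> R) M : (forall i, q (S i) = p i) ->
  rsum M (fun i => u i * p (S i) + u (S i) * p i) + u 0%nat * q 0%nat + u M * p (S M)
  = rsum (S M) (fun i => u i * (p (S i) + q i)).
Proof.
  intros Hq. induction M.
  - simpl. lra.
  - change (rsum (S (S M)) (fun i => u i * (p (S i) + q i))) with
      (rsum (S M) (fun i => u i * (p (S i) + q i)) + u (S M) * (p (S (S M)) + q (S M))).
    rewrite <- IHM. rewrite Hq. simpl. lra.
Qed.

Lemma picone_pt (f1 f2 z1 z2 t : R) : 0 < f1 -> 0 < f2 ->
  z1 ^ 2 / f1 * f2 + z2 ^ 2 / f2 * f1 - 2 * (z1 * z2) >=
  2 * t * (z1 / f1 - z2 / f2) - t ^ 2 / (f1 * f2).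
Proof.
  intros H1 H2.
  set (d := z1 / f1 - z2 / f2).
  assert (E: z1 ^ 2 / f1 * f2 + z2 ^ 2 / f2 * f1 - 2 * (z1 * z2) - (2 * t * d - t ^ 2 / (f1 * f2))
            = (f1 * f2 * d - t) ^ 2 / (f1 * f2)).
  { unfold d. field. split; lra. }
  assert (0 <= (f1 * f2 * d - t) ^ 2 / (f1 * f2)).
  { apply Rmult_le_pos. apply pow2_ge_0. left; apply Rinv_0_lt_compat; apply Rmult_lt_0_compat; lra. }
  lra.
Qed.

Section Wirt.
Variable M : nat.
Hypothesis HM : (1 <= M)%nat.
Let m := S M.
Let h := PI / (2 * INR m).
Let phi (i : nat) := sin ((2 * INR i + 1) * h).
Let qphi (i : nat) := sin ((2 * INR i - 1) * h).

Lemma INRm_ge2 : 2 <= INR m.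
Proof. unfold m. rewrite S_INR. apply (le_INR 1) in HM. simpl in HM. lra. Qed.

Lemma h_pos : 0 < h.
Proof. unfold h. assert (H:=INRm_ge2). apply Rdiv_lt_0_compat; [apply PI_RGT_0| lra]. Qed.

Lemma h_le : h <= PI / 4.
Proof. unfold h. assert (H:=INRm_ge2). assert (HP := PI_RGT_0).
  apply Rmult_le_compat_l; [lra|]. apply Rinv_le_contravar; lra. Qed.

Lemma mh : INR m * h = PI / 2.
Proof. unfold h. assert (H:=INRm_ge2). field. lra. Qed.

Lemma phi_pos i : (i < m)%nat -> 0 < phi i.
Proof.
  intros Hi. unfold phi. assert (Hh := h_pos). apply sin_gt_0.
  - assert (0 <= INR i) by apply pos_INR. nra.
  - assert (Hi' : INR (S i) <= INR m) by (apply le_INR; lia). rewrite S_INR in Hi'.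
    assert ((2 * INR i + 1) * h <= (2 * INR m - 1) * h).
    { apply Rmult_le_compat_r; lra. }
    assert (H2 := mh). nra.
Qed.

Lemma phi_rec i : phi (S i) + qphi i = 2 * cos (2 * h) * phi i.
Proof.
  unfold phi, qphi. rewrite S_INR.
  replace ((2 * (INR i + 1) + 1) * h) with ((2 * INR i + 1) * h + 2 * h) by ring.
  replace ((2 * INR i - 1) * h) with ((2 * INR i + 1) * h - 2 * h) by ring.
  rewrite sin_plus, sin_minus. ring.
Qed.

Lemma qphi_S i : qphi (S i) = phi i.
Proof. unfold phi, qphi. rewrite S_INR. f_equal. ring. Qed.

Lemma phi0 : phi 0 = sin h.
Proof. unfold phi. simpl. f_equal. ring. Qed.
Lemma qphi0 : qphi 0 = - sin h.
Proof. unfold qphi. simpl. replace ((2 * 0 - 1) * h) with (- h) by ring. apply sin_neg. Qed.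
Lemma phiM : phi M = sin h.
Proof. unfold phi. replace ((2 * INR M + 1) * h) with (PI - h).
  apply sin_PI_x. assert (H:= mh). unfold m in H. rewrite S_INR in H. nra. Qed.
Lemma cosM : cos ((2 * INR M + 1) * h) = - cos h.
Proof. replace ((2 * INR M + 1) * h) with (PI - h).
  rewrite cos_minus, cos_PI, sin_PI. ring. assert (H:= mh). unfold m in H. rewrite S_INR in H. nra. Qed.
Lemma phiSM : phi (S M) = - sin h.
Proof. unfold phi. rewrite S_INR. replace ((2 * (INR M + 1) + 1) * h) with (h + PI).
  rewrite neg_sin. auto. assert (H:= mh). unfold m in H. rewrite S_INR in H. nra. Qed.

Lemma sinh_pos : 0 < sin h.
Proof. assert (H:=h_pos). assert (H2:=h_le). apply sin_gt_0; [lra|]. assert (HP:=PI_RGT_0); lra. Qed.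
Lemma cosh_pos : 0 < cos h.
Proof. assert (H:=h_pos). assert (H2:=h_le). apply cos_gt_0; assert (HP:=PI_RGT_0); lra. Qed.

Lemma inv_p_sum : rsum M (fun i => / (phi i * phi (S i))) = / (sin h ^ 2).
Proof.
  set (kap := fun i : nat => - (cos ((2 * INR i + 1) * h) / phi i) / sin (2 * h)).
  assert (Hs2 : 0 < sin (2 * h)).
  { rewrite sin_2a. assert (Hsh:=sinh_pos). assert (Hch:=cosh_pos). nra. }
  transitivity (rsum M (fun i => kap (S i) - kap i)).
  - apply rsum_ext. intros i Hi.
    assert (P1 := phi_pos i ltac:(unfold m; lia)).
    assert (P2 := phi_pos (S i) ltac:(unfold m; lia)).
    unfold kap. unfold phi in *. rewrite S_INR in *.
    set (s := (2 * INR i + 1) * h) in *.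
    replace ((2 * (INR i + 1) + 1) * h) with (s + 2 * h) in * by (unfold s; ring).
    assert (E: sin (2 * h) = sin (s + 2 * h) * cos s - cos (s + 2 * h) * sin s).
    { replace (2 * h) with ((s + 2 * h) - s) at 1 by ring. apply sin_minus. }
    field_simplify; try lra. rewrite E. field. lra.
  - rewrite rsum_tele. unfold kap. fold (phi M). rewrite phiM, cosM.
    unfold phi. simpl (INR 0). replace ((2 * 0 + 1) * h) with h by ring.
    rewrite sin_2a. assert (Hsh:=sinh_pos). assert (Hch:=cosh_pos). field. lra.
Qed.

Lemma wirt_core (z : nat -> R) : z m = - z 0%nat ->
  rsum m (fun i => z i * z (S i)) <= cos (2 * h) * rsum m (fun i => z i ^ 2).
Proof.
  intros Hz.
  set (u := fun i => z i ^ 2 / phi i).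
  assert (I1 := sbp_gen u phi qphi M qphi_S).
  assert (E1 : rsum (S M) (fun i => u i * (phi (S i) + qphi i)) = 2 * cos (2*h) * rsum m (fun i => z i ^ 2)).
  { rewrite <- rsum_scal. apply rsum_ext. intros i Hi. rewrite phi_rec. unfold u.
    assert (P := phi_pos i Hi). field. lra. }
  assert (E2 : u 0%nat * qphi 0%nat = - z 0%nat ^ 2).
  { unfold u. rewrite qphi0, phi0. assert (Hsh:=sinh_pos). field. lra. }
  assert (E3 : u M * phi (S M) = - z M ^ 2).
  { unfold u. rewrite phiSM, phiM. assert (Hsh:=sinh_pos). field. lra. }
  set (D := rsum M (fun i => z i / phi i - z (S i) / phi (S i))).
  assert (ED : D = (z 0%nat - z M) / sin h).
  { unfold D. set (g := fun i => - (z i / phi i)).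
    transitivity (rsum M (fun i => g (S i) - g i)).
    - apply rsum_ext; intros; unfold g; ring.
    - rewrite rsum_tele. unfold g. rewrite phiM, <- phi0. field. rewrite phi0. assert (Hsh:=sinh_pos). lra. }
  set (t := sin h ^ 2 * D).
  assert (I2 : rsum M (fun i => u i * phi (S i) + u (S i) * phi i - 2 * (z i * z (S i)))
             >= rsum M (fun i => 2 * t * (z i / phi i - z (S i) / phi (S i)) - t ^ 2 * / (phi i * phi (S i)))).
  { apply Rle_ge. apply rsum_le. intros i Hi. unfold u.
    assert (P1 := phi_pos i ltac:(unfold m; lia)).
    assert (P2 := phi_pos (S i) ltac:(unfold m; lia)).
    apply Rge_le. apply picone_pt; auto. }
  rewrite rsum_minus, rsum_minus, rsum_scal, rsum_scal, rsum_scal in I2.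
  fold D in I2. rewrite inv_p_sum in I2.
  change (rsum m (fun i => z i * z (S i))) with (rsum M (fun i => z i * z (S i)) + z M * z m).
  rewrite Hz.
  assert (t * D = sin h ^2 * D * D) by (unfold t; ring).
  assert (t ^ 2 * / sin h ^ 2 = sin h ^ 2 * D * D).
  { unfold t. assert (Hsh:=sinh_pos). field. lra. }
  assert (sin h ^ 2 * D * D = (z 0%nat - z M) ^ 2).
  { rewrite ED. assert (Hsh:=sinh_pos). field. lra. }
  lra.
Qed.

Definition cot' x := cos x / sin x.

Lemma wirt (z : nat -> R) : z m = - z 0%nat ->
  rsum m (fun i => (z i + z (S i)) ^ 2) <= (cos h / sin h) ^ 2 * rsum m (fun i => (z (S i) - z i) ^ 2).
Proof.
  intros Hz. assert (C := wirt_core z Hz).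
  assert (T : rsum m (fun i => z (S i) ^ 2 - z i ^ 2) = 0).
  { rewrite (rsum_tele m (fun i => z i ^ 2)), Hz. ring. }
  rewrite rsum_minus in T.
  assert (E1 : rsum m (fun i => (z i + z (S i)) ^ 2) =
     rsum m (fun i => z i ^ 2) + rsum m (fun i => z (S i) ^ 2) + 2 * rsum m (fun i => z i * z (S i))).
  { rewrite <- rsum_scal, <- !rsum_plus. apply rsum_ext; intros; ring. }
  assert (E2 : rsum m (fun i => (z (S i) - z i) ^ 2) =
     rsum m (fun i => z i ^ 2) + rsum m (fun i => z (S i) ^ 2) - 2 * rsum m (fun i => z i * z (S i))).
  { rewrite <- rsum_scal, <- rsum_plus, <- rsum_minus. apply rsum_ext; intros; ring. }
  rewrite E1, E2. rewrite cos_2a in C.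
  set (A := rsum m (fun i => z i ^ 2)) in *.
  set (B := rsum m (fun i => z i * z (S i))) in *.
  assert (A' : rsum m (fun i => z (S i) ^ 2) = A) by lra. rewrite A'.
  assert (S1 := sinh_pos). assert (C1 := cosh_pos).
  assert (Pyth := sin2_cos2 h). unfold Rsqr in Pyth.
  assert (B * (sin h * sin h + cos h * cos h) <= (cos h * cos h - sin h * sin h) * A) by (rewrite Pyth; lra).
  replace ((cos h / sin h) ^ 2 * (A + A - 2 * B)) with ((cos h * cos h) * (2 * A - 2 * B) / (sin h * sin h)) by (field; lra).
  apply Rmult_le_reg_r with (sin h * sin h). nra.
  unfold Rdiv. rewrite Rmult_assoc, Rinv_l by nra. nra.
Qed.

End Wirt.

Lemma sbp2 (x y : nat -> R) m :
  rsum m (fun i => x i * rsum i y) = rsum m (fun i => y i * (rsum m x - rsum (S i) x)).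
Proof.
  induction m.
  - simpl. lra.
  - change (rsum (S m) (fun i => x i * rsum i y)) with (rsum m (fun i => x i * rsum i y) + x m * rsum m y).
    change (rsum (S m) (fun i => y i * (rsum (S m) x - rsum (S i) x))) with
      (rsum m (fun i => y i * (rsum (S m) x - rsum (S i) x)) + y m * (rsum (S m) x - rsum (S m) x)).
    rewrite IHm.
    transitivity (rsum m (fun i => y i * (rsum m x - rsum (S i) x) + x m * y i)).
    + rewrite rsum_plus, rsum_scal. lra.
    + simpl (rsum (S m) x). rewrite Rminus_diag, Rmult_0_r, Rplus_0_r. apply rsum_ext. intros; ring.
Qed.

Lemma key (m : nat) (Hm : (2 <= m)%nat) (x y : nat -> R) :
  rsum m (fun i => rsum i (fun j => x j * y i - y j * x i)) <=
  1 / 2 * cot (PI / (2 * INR m)) * rsum m (fun i => x i ^ 2 + y i ^ 2).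
Proof.
  destruct m as [|M]; [lia|].
  assert (HM : (1 <= M)%nat) by lia.
  set (h := PI / (2 * INR (S M))).
  assert (Hh0 : 0 < h).
  { unfold h. assert (H : 2 <= INR (S M)) by (replace 2 with (INR 2) by (simpl; ring); apply le_INR; lia). apply Rdiv_lt_0_compat; [apply PI_RGT_0|lra]. }
  assert (Hh1 : h <= PI / 4).
  { unfold h. assert (H : 2 <= INR (S M)) by (replace 2 with (INR 2) by (simpl; ring); apply le_INR; lia). assert (HP := PI_RGT_0).
    apply Rmult_le_compat_l; [lra|]. apply Rinv_le_contravar; lra. }
  assert (Sh : 0 < sin h) by (apply sin_gt_0; assert (HP:=PI_RGT_0); lra).
  assert (Ch : 0 < cos h) by (apply cos_gt_0; assert (HP:=PI_RGT_0); lra).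
  set (c := cos h / sin h).
  assert (Hc : 0 < c) by (unfold c; apply Rdiv_lt_0_compat; lra).
  unfold cot. fold h. fold c.
  set (m := S M) in *.
  set (X := rsum m x).
  set (z := fun i => rsum i x - X / 2).
  assert (Hz : z m = - z 0%nat).
  { unfold z. change (rsum 0%nat x) with 0. unfold X. lra. }
  assert (W := wirt M HM z Hz). fold m h in W. fold c in W.
  assert (E : rsum m (fun i => rsum i (fun j => x j * y i - y j * x i)) =
              rsum m (fun i => y i * (z i + z (S i)))).
  { transitivity (rsum m (fun i => y i * rsum i x - x i * rsum i y)).
    - apply rsum_ext. intros i _. rewrite rsum_minus.
      rewrite <- (rsum_scal i (y i) x), <- (rsum_scal i (x i) y). f_equal; apply rsum_ext; intros; ring.
    - rewrite rsum_minus, (sbp2 x y m), <- rsum_minus. apply rsum_ext. intros i _. unfold z. fold X. simpl (rsum (S i) x). field. }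
  rewrite E.
  assert (Hd : forall i, (z (S i) - z i) = x i) by (intros; unfold z; simpl; ring).
  assert (W' : rsum m (fun i => (z i + z (S i)) ^ 2) <= c ^ 2 * rsum m (fun i => x i ^ 2)).
  { replace (rsum m (fun i => x i ^ 2)) with (rsum m (fun i => (z (S i) - z i) ^ 2)); auto.
    apply rsum_ext; intros; rewrite Hd; auto. }
  assert (P : rsum m (fun i => y i * (z i + z (S i))) <=
              rsum m (fun i => 1/2 * c * y i ^ 2 + 1 / 2 * / c * (z i + z (S i)) ^ 2)).
  { apply rsum_le. intros i _.
    assert (0 <= (c * y i - (z i + z (S i))) ^ 2 / c).
    { apply Rmult_le_pos; [apply pow2_ge_0| left; apply Rinv_0_lt_compat; auto]. }
    assert (Eq : 1/2 * c * y i ^ 2 + 1 / 2 * / c * (z i + z (S i)) ^ 2 - y i * (z i + z (S i))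
                 = 1/2 * ((c * y i - (z i + z (S i))) ^ 2 / c)) by (field; lra).
    lra. }
  rewrite rsum_plus, rsum_scal, rsum_scal in P.
  rewrite rsum_plus.
  assert (1 / 2 * / c * rsum m (fun i => (z i + z (S i)) ^ 2) <= 1/2 * / c * (c ^ 2 * rsum m (fun i => x i ^ 2))).
  { apply Rmult_le_compat_l; auto. left. apply Rmult_lt_0_compat; [lra| apply Rinv_0_lt_compat; auto]. }
  replace (1 / 2 * / c * (c ^ 2 * rsum m (fun i => x i ^ 2))) with (1/2 * c * rsum m (fun i => x i ^ 2)) in H by (field; lra).
  lra.
Qed.

Definition det (p q : R * R) : R := fst p * snd q - snd p * fst q.
Definition sumL (l : list R) : R := fold_right Rplus 0 l.
Fixpoint Fa (l : list (R * R)) : R :=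
  match l with nil => 0 | u :: l' => sumL (map (fun v => Rabs (det u v)) l') + Fa l' end.
Fixpoint Fs (l : list (R * R)) : R :=
  match l with nil => 0 | u :: l' => sumL (map (fun v => det u v) l') + Fs l' end.
Definition Gs (l : list (R * R)) : R := sumL (map (fun v => fst v ^ 2 + snd v ^ 2) l).

Lemma sumL_perm l1 l2 : Permutation l1 l2 -> sumL l1 = sumL l2.
Proof. induction 1; simpl; lra. Qed.

Lemma det_anti p q : det p q = - det q p.
Proof. unfold det; ring. Qed.

Lemma Fa_perm l1 l2 : Permutation l1 l2 -> Fa l1 = Fa l2.
Proof.
  induction 1; simpl.
  - auto.
  - rewrite IHPermutation. f_equal. apply sumL_perm. apply Permutation_map; auto.
  - rewrite (det_anti x y), Rabs_Ropp. lra.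
  - congruence.
Qed.

Lemma Gs_perm l1 l2 : Permutation l1 l2 -> Gs l1 = Gs l2.
Proof. intros H. unfold Gs. apply sumL_perm, Permutation_map, H. Qed.

Lemma sumL_map_nth {A} (f : A -> R) l d :
  sumL (map f l) = rsum (length l) (fun i => f (nth i l d)).
Proof.
  induction l; [simpl; auto|]. change (length (a :: l)) with (S (length l)).
  rewrite rsum_shift. simpl. rewrite IHl. auto.
Qed.

Lemma Fs_rsum l d : Fs l = rsum (length l) (fun i => rsum i (fun j => det (nth j l d) (nth i l d))).
Proof.
  induction l as [|u l IH]; [simpl; auto|]. change (length (u :: l)) with (S (length l)).
  rewrite rsum_shift. change (rsum 0 _) with 0. rewrite Rplus_0_l. simpl Fs; simpl Fa.
  transitivity (rsum (length l) (fun i => det u (nth i l d) + rsum i (fun j => det (nth j l d) (nth i l d)))).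
  - rewrite rsum_plus, <- IH, sumL_map_nth with (d := d). auto.
  - apply rsum_ext. intros i _. rewrite rsum_shift. simpl. auto.
Qed.

Lemma Fa_rsum l d : Fa l = rsum (length l) (fun i => rsum i (fun j => Rabs (det (nth j l d) (nth i l d)))).
Proof.
  induction l as [|u l IH]; [simpl; auto|]. change (length (u :: l)) with (S (length l)).
  rewrite rsum_shift. change (rsum 0 _) with 0. rewrite Rplus_0_l. simpl Fs; simpl Fa.
  transitivity (rsum (length l) (fun i => Rabs (det u (nth i l d)) + rsum i (fun j => Rabs (det (nth j l d) (nth i l d))))).
  - rewrite rsum_plus, <- IH, sumL_map_nth with (d := d). auto.
  - apply rsum_ext. intros i _. rewrite rsum_shift. simpl. auto.
Qed.

Lemma Gs_rsum l d : Gs l = rsum (length l) (fun i => fst (nth i l d) ^ 2 + snd (nth i l d) ^ 2).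
Proof. unfold Gs. rewrite sumL_map_nth with (d := d). auto. Qed.

Definition neg_side (p : R * R) : bool :=
  if Rlt_dec (snd p) 0 then true
  else if Req_EM_T (snd p) 0 then (if Rlt_dec (fst p) 0 then true else false) else false.
Definition flip (p : R * R) : R * R := if neg_side p then (- fst p, - snd p) else p.
Definition inH0 (p : R * R) : Prop := 0 < snd p \/ (snd p = 0 /\ 0 <= fst p).
Definition inH (p : R * R) : Prop := 0 < snd p \/ (snd p = 0 /\ 0 < fst p).

Lemma flip_inH0 p : inH0 (flip p).
Proof.
  unfold flip, neg_side, inH0. destruct p as [a b]; simpl.
  destruct (Rlt_dec b 0); simpl; [lra|].
  destruct (Req_EM_T b 0); simpl.
  - destruct (Rlt_dec a 0); simpl; lra.
  - lra.
Qed.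

Lemma flip_id p : inH0 p -> flip p = p.
Proof.
  unfold flip, neg_side, inH0. destruct p as [a b]; simpl. intros H.
  destruct (Rlt_dec b 0); [lra|].
  destruct (Req_EM_T b 0); auto.
  destruct (Rlt_dec a 0); auto. lra.
Qed.

Lemma flip_sq p : fst (flip p) ^ 2 + snd (flip p) ^ 2 = fst p ^ 2 + snd p ^ 2.
Proof. unfold flip. destruct (neg_side p); simpl; ring. Qed.

Lemma flip_det p q : Rabs (det (flip p) (flip q)) = Rabs (det p q).
Proof.
  unfold flip. destruct (neg_side p), (neg_side q); unfold det; simpl;
  try (rewrite <- Rabs_Ropp; f_equal; ring); f_equal; ring.
Qed.

Lemma Fa_flip l : Fa (map flip l) = Fa l.
Proof.
  induction l; simpl; auto. rewrite IHl. f_equal. rewrite map_map. f_equal.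
  apply map_ext. intros; apply flip_det.
Qed.

Lemma Gs_flip l : Gs (map flip l) = Gs l.
Proof. unfold Gs. rewrite map_map. f_equal. apply map_ext. intros; apply flip_sq. Qed.

Definition keyv (p : R * R) : R * R :=
  if Req_EM_T (fst p) 0 then (if Req_EM_T (snd p) 0 then (1, 0) else p) else p.

Lemma keyv_inH p : inH0 p -> inH (keyv p).
Proof.
  unfold keyv, inH0, inH. destruct p as [a b]; simpl. intros H.
  destruct (Req_EM_T a 0); simpl; [destruct (Req_EM_T b 0); simpl|]; lra.
Qed.

Lemma det_trans p q r : inH p -> inH q -> inH r -> 0 <= det p q -> 0 <= det q r -> 0 <= det p r.
Proof.
  destruct p as [a b], q as [c d], r as [e f]. unfold inH, det; simpl.
  intros Hp Hq Hr H1 H2.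
  destruct Hq as [Hd | [Hd Hc]].
  - destruct Hp as [Hb | [Hb Ha]].
    + destruct Hr as [Hf | [Hf He]].
      * assert (0 <= (a * d - b * c) * f) by (apply Rmult_le_pos; lra).
        assert (0 <= (c * f - d * e) * b) by (apply Rmult_le_pos; lra).
        assert (0 <= d * (a * f - b * e)) by nra.
        apply Rmult_le_reg_l with d; [lra|]. lra.
      * subst f. assert (c * 0 - d * e < 0) by nra. lra.
    + subst b. nra.
  - subst d. assert (b <= 0) by nra.
    destruct Hp as [Hb | [Hb Ha]]; [lra|]. subst b. nra.
Qed.

Definition keyf p := keyv (flip p).

Module VOrder <: TotalLeBool'.
  Definition t := (R * R)%type.
  Definition leb (p q : t) : bool := if Rle_dec 0 (det (keyf p) (keyf q)) then true else false.
  Infix "<=?" := leb (at level 70, no associativity).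
  Theorem leb_total : forall p q, (p <=? q) = true \/ (q <=? p) = true.
  Proof.
    intros p q. unfold leb. rewrite (det_anti (keyf q)).
    destruct (Rle_dec 0 (det (keyf p) (keyf q))); auto.
    destruct (Rle_dec 0 (- det (keyf p) (keyf q))); auto. lra.
  Qed.
End VOrder.

Module VSort := Sort VOrder.

Lemma leb_trans : Transitive (fun p q => VOrder.leb p q = true).
Proof.
  intros p q r. unfold VOrder.leb.
  destruct (Rle_dec 0 (det (keyf p) (keyf q))); try discriminate.
  destruct (Rle_dec 0 (det (keyf q) (keyf r))); try discriminate.
  intros _ _. destruct (Rle_dec 0 (det (keyf p) (keyf r))); auto.
  exfalso. apply n. unfold keyf in *.
  apply det_trans with (keyv (flip q)); auto; apply keyv_inH, flip_inH0.
Qed.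

Lemma leb_det p q : inH0 p -> inH0 q -> VOrder.leb p q = true -> 0 <= det p q.
Proof.
  intros Hp Hq. unfold VOrder.leb, keyf. rewrite !flip_id by auto.
  destruct (Rle_dec 0 (det (keyv p) (keyv q))); try discriminate. intros _.
  unfold keyv in r. destruct p as [a b], q as [c d]. simpl in r.
  destruct (Req_EM_T a 0); [destruct (Req_EM_T b 0)|].
  - subst. unfold det. simpl. lra.
  - destruct (Req_EM_T c 0); [destruct (Req_EM_T d 0)|]; auto.
    subst. unfold det; simpl; lra.
  - destruct (Req_EM_T c 0); [destruct (Req_EM_T d 0)|]; auto.
    subst. unfold det; simpl; lra.
Qed.

Lemma Fa_sorted l : StronglySorted (fun p q => VOrder.leb p q = true) l -> Forall inH0 l -> Fa l = Fs l.
Proof.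
  induction 1 as [|a l Hs IH Hf]; simpl; auto. intros HF. inversion HF; subst.
  rewrite IH by auto. f_equal. f_equal. apply map_ext_in. intros v Hv.
  rewrite Rabs_right; auto. apply Rle_ge. apply leb_det; auto.
  - rewrite Forall_forall in H2; auto.
  - rewrite Forall_forall in Hf; auto.
Qed.

Lemma sort_exists l : exists l', Permutation (map flip l) l' /\
   StronglySorted (fun p q => VOrder.leb p q = true) l' /\ Forall inH0 l'.
Proof.
  exists (VSort.sort (map flip l)). split; [apply VSort.Permuted_sort|]. split.
  - apply VSort.StronglySorted_sort. apply leb_trans.
  - apply Forall_forall. intros x Hx.
    apply (Permutation_in _ (Permutation_sym (VSort.Permuted_sort (map flip l)))) in Hx.
    apply in_map_iff in Hx. destruct Hx as [y [<- _]]. apply flip_inH0.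
Qed.

Lemma rsum_pos n f : (forall i, (i < n)%nat -> 0 <= f i) -> (exists i, (i < n)%nat /\ 0 < f i) -> 0 < rsum n f.
Proof.
  induction n; intros H [i [Hi Hf]]; [lia|]. simpl.
  assert (0 <= rsum n f) by (apply rsum_nonneg; intros; apply H; lia).
  assert (0 <= f n) by (apply H; lia).
  destruct (Nat.eq_dec i n).
  - subst. lra.
  - assert (0 < rsum n f) by (apply IHn; [intros; apply H; lia| exists i; split; [lia|auto]]). lra.
Qed.

Lemma upper (n : nat) (Hn : (2 <= n)%nat) M a b :
  std_laplacian n M -> is_eigenvalue n M a b -> b <= 1 / (2 * INR n) * cot (PI / (2 * INR n)).
Proof.
  intros [Hrow Hoff] [x [y [[i0 [Hi0 Hnz]] Heq]]].
  assert (HnR : 2 <= INR n) by (replace 2 with (INR 2) by (simpl; ring); apply le_INR; lia).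
  set (N := rsum n (fun i => x i ^ 2 + y i ^ 2)).
  assert (HN : 0 < N).
  { apply rsum_pos. intros; nra. exists i0; split; auto. destruct Hnz; nra. }
  set (D := fun i j => x i * y j - y i * x j).
  assert (E1 : b * N = rsum n (fun i => rsum n (fun j => M i j * D i j))).
  { unfold N. rewrite <- rsum_scal. apply rsum_ext. intros i Hi.
    destruct (Heq i Hi) as [E E'].
    transitivity (x i * rsum n (fun j => M i j * y j) - y i * rsum n (fun j => M i j * x j)).
    - rewrite E, E'. ring.
    - rewrite <- !rsum_scal, <- rsum_minus. apply rsum_ext. intros; unfold D; ring. }
  rewrite rsum_pair in E1.
  set (l0 := map (fun k => (x k, y k)) (seq 0 n)).
  assert (Hl0 : length l0 = n) by (unfold l0; rewrite length_map, length_seq; auto).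
  assert (Hnth : forall i, (i < n)%nat -> nth i l0 (0,0) = (x i, y i)).
  { intros i Hi. unfold l0. rewrite nth_indep with (d' := (x 0%nat, y 0%nat)) by (rewrite length_map, length_seq; auto).
    rewrite (map_nth (fun k => (x k, y k)) (seq 0 n) 0%nat i), seq_nth; auto. }
  assert (E2 : b * N <= / INR n * Fa l0).
  { rewrite E1, (Fa_rsum l0 (0,0)), Hl0, <- rsum_scal. apply rsum_le. intros i Hi.
    assert (D0 : D i i = 0) by (unfold D; ring). rewrite D0, Rmult_0_r, Rplus_0_l.
    rewrite <- rsum_scal. apply rsum_le. intros j Hj.
    rewrite (Hnth i Hi), (Hnth j ltac:(lia)). unfold det; simpl.
    destruct (Hoff i j Hi ltac:(lia) ltac:(lia)) as [A1 A2].
    destruct (Hoff j i ltac:(lia) Hi ltac:(lia)) as [B1 B2].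
    rewrite Rabs_left1 in A2 by auto. rewrite Rabs_left1 in B2 by auto.
    assert (Dji : D j i = - D i j) by (unfold D; ring). rewrite Dji.
    assert (Ab : Rabs (x j * y i - y j * x i) = Rabs (D i j)) by (rewrite <- Rabs_Ropp; f_equal; unfold D; ring).
    rewrite Ab. unfold Rdiv in A2, B2. rewrite Rmult_1_l in A2, B2.
    destruct (Rle_dec 0 (D i j)).
    + rewrite Rabs_right by lra. nra.
    + rewrite Rabs_left by lra. nra. }
  destruct (sort_exists l0) as [l' [Hp [Hs Hf]]].
  assert (E3 : Fa l0 = Fs l').
  { rewrite <- Fa_flip, (Fa_perm _ _ Hp). apply Fa_sorted; auto. }
  assert (E4 : Gs l' = N).
  { rewrite <- (Gs_perm _ _ Hp), Gs_flip, (Gs_rsum l0 (0,0)), Hl0. unfold N. apply rsum_ext.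
    intros i Hi. rewrite Hnth; auto. }
  assert (Hl' : length l' = n).
  { rewrite <- (Permutation_length Hp), length_map; auto. }
  assert (K := key n Hn (fun i => fst (nth i l' (0,0))) (fun i => snd (nth i l' (0,0)))).
  assert (K' : Fs l' <= 1 / 2 * cot (PI / (2 * INR n)) * Gs l').
  { rewrite (Fs_rsum l' (0,0)), (Gs_rsum l' (0,0)), Hl'. exact K. }
  rewrite E4, <- E3 in K'.
  assert (Hin : 0 < / INR n) by (apply Rinv_0_lt_compat; lra).
  assert (b * N <= / INR n * (1 / 2 * cot (PI / (2 * INR n)) * N)).
  { apply Rle_trans with (/ INR n * Fa l0); auto. apply Rmult_le_compat_l; lra. }
  replace (/ INR n * (1 / 2 * cot (PI / (2 * INR n)) * N)) with
    (1 / (2 * INR n) * cot (PI / (2 * INR n)) * N) in H by (field; lra).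
  apply Rmult_le_reg_r with N; auto.
Qed.

Lemma rsum_S_shift n g : rsum n (fun j => g (S j)) = rsum n g + g n - g 0%nat.
Proof.
  assert (H := rsum_shift n g). change (rsum (S n) g) with (rsum n g + g n) in H. lra.
Qed.

Lemma rsum_shift_inv n (H : nat -> R) : (forall t, H (t + n)%nat = H t) ->
  forall s, rsum n (fun j => H (j + s)%nat) = rsum n H.
Proof.
  intros Hp s. induction s.
  - apply rsum_ext. intros; f_equal; lia.
  - transitivity (rsum n (fun j => (fun j' => H (j' + s)%nat) (S j))).
    + apply rsum_ext. intros; simpl; f_equal; lia.
    + rewrite (rsum_S_shift n (fun j' => H (j' + s)%nat)). rewrite IHs. simpl. rewrite (Nat.add_comm n s), Hp. ring.
Qed.

Lemma rsum_opp n f : rsum n (fun i => - f i) = - rsum n f.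
Proof. induction n; simpl; lra. Qed.

Section Circ.
Variable k : nat.
Hypothesis Hk : (1 <= k)%nat.
Let n := (2 * k + 1)%nat.

Definition w (d : nat) : R :=
  if Nat.eqb d 0 then INR k / INR n else if Nat.leb d k then - / INR n else 0.

Definition Mc (i j : nat) : R := w ((j + n - i) mod n).

Lemma circ_reindex (F : nat -> R) i : (forall t, F (t + n)%nat = F t) -> (i < n)%nat ->
  rsum n (fun j => Mc i j * F j) = rsum n (fun d => w d * F (d + i)%nat).
Proof.
  intros HF Hi.
  set (H := fun t => w (t mod n) * F (t + i)%nat).
  assert (HP : forall t, H (t + n)%nat = H t).
  { intros t. unfold H. replace (t + n)%nat with (t + 1 * n)%nat by lia.
    rewrite Nat.Div0.mod_add. f_equal. replace (t + 1 * n + i)%nat with (t + i + n)%nat by lia. apply HF. }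
  transitivity (rsum n (fun j => H (j + (n - i))%nat)).
  - apply rsum_ext. intros j Hj. unfold H, Mc. f_equal.
    + f_equal. f_equal. lia.
    + replace (j + (n - i) + i)%nat with (j + n)%nat by lia. symmetry; apply HF.
  - rewrite rsum_shift_inv by auto. apply rsum_ext. intros d Hd. unfold H. rewrite Nat.mod_small; auto.
Qed.

Lemma w_sum_small m (G : nat -> R) : (m <= k)%nat ->
  rsum (S m) (fun d => w d * G d) = INR k / INR n * G 0%nat - / INR n * rsum m (fun t => G (S t)).
Proof.
  induction m; intros Hm.
  - simpl. unfold w. simpl. ring.
  - change (rsum (S (S m)) (fun d => w d * G d)) with (rsum (S m) (fun d => w d * G d) + w (S m) * G (S m)).
    rewrite IHm by lia. simpl (rsum (S m) (fun t => G (S t))).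
    unfold w at 1. replace (Nat.eqb (S m) 0) with false by auto.
    replace (Nat.leb (S m) k) with true by (symmetry; apply Nat.leb_le; lia). ring.
Qed.

Lemma w_sum_big m (G : nat -> R) : (S k <= m)%nat ->
  rsum m (fun d => w d * G d) = rsum (S k) (fun d => w d * G d).
Proof.
  induction m; intros Hm; [lia|].
  destruct (Nat.eq_dec m k).
  - subst. auto.
  - change (rsum (S m) (fun d => w d * G d)) with (rsum m (fun d => w d * G d) + w m * G m).
    rewrite IHm by lia. unfold w at 2. replace (Nat.eqb m 0) with false by (symmetry; apply Nat.eqb_neq; lia).
    replace (Nat.leb m k) with false by (symmetry; apply Nat.leb_gt; lia). ring.
Qed.

Lemma circ_sum (F : nat -> R) i : (forall t, F (t + n)%nat = F t) -> (i < n)%nat ->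
  rsum n (fun j => Mc i j * F j) = INR k / INR n * F i - / INR n * rsum k (fun t => F (S t + i)%nat).
Proof.
  intros HF Hi. rewrite circ_reindex by auto.
  rewrite w_sum_big by (unfold n; lia). rewrite w_sum_small by lia. simpl. auto.
Qed.

Lemma INRn_pos : 0 < INR n.
Proof. apply lt_0_INR. unfold n; lia. Qed.

Lemma Mc_lap : std_laplacian n Mc.
Proof.
  split.
  - intros i Hi. transitivity (rsum n (fun j => Mc i j * 1)).
    + apply rsum_ext; intros; ring.
    + rewrite (circ_sum (fun _ => 1)) by auto. rewrite rsum_const.
      assert (H := INRn_pos). field. lra.
  - intros i j Hi Hj Hij. unfold Mc.
    assert (Hd : ((j + n - i) mod n <> 0)%nat).
    { destruct (le_lt_dec i j).
      + replace (j + n - i)%nat with ((j - i) + 1 * n)%nat by lia. rewrite Nat.Div0.mod_add.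
        rewrite Nat.mod_small by lia. lia.
      + rewrite Nat.mod_small by lia. lia. }
    assert (H := INRn_pos).
    assert (Hinv : 0 < / INR n) by (apply Rinv_0_lt_compat; auto).
    unfold w. replace (Nat.eqb ((j + n - i) mod n) 0) with false by (symmetry; apply Nat.eqb_neq; auto).
    destruct (Nat.leb _ k).
    + split; [lra|]. rewrite Rabs_Ropp, Rabs_right by lra. unfold Rdiv; lra.
    + split; [lra|]. rewrite Rabs_R0. unfold Rdiv. lra.
Qed.

Definition th (t : nat) : R := 2 * PI * INR t / INR n.

Lemma th_per t : th (t + n) = th t + 2 * PI.
Proof. unfold th. rewrite plus_INR. assert (H := INRn_pos). field. lra. Qed.

Lemma th_add t i : th (S t + i) = th i + th (S t).
Proof. unfold th. rewrite plus_INR. assert (H := INRn_pos). field. lra. Qed.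

Lemma Mc_eig : is_eigenvalue n Mc
   (/ INR n * (INR k - rsum k (fun t => cos (2 * PI * INR (S t) / INR n)))) (lambda_im k n).
Proof.
  exists (fun j => cos (th j)), (fun j => - sin (th j)). split.
  - exists 0%nat. split; [unfold n; lia|]. left. assert (T0 : th 0 = 0) by (unfold th; simpl; unfold Rdiv; ring). rewrite T0, cos_0. lra.
  - intros i Hi. unfold lambda_im. fold n. assert (H := INRn_pos).
    set (C := rsum k (fun t => cos (2 * PI * INR (S t) / INR n))).
    set (S := rsum k (fun t => sin (2 * PI * INR (S t) / INR n))).
    assert (EC : rsum k (fun t => cos (th (Datatypes.S t + i))) = cos (th i) * C - sin (th i) * S).
    { unfold C, S. rewrite <- !rsum_scal, <- rsum_minus. apply rsum_ext. intros t _.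
      rewrite th_add, cos_plus. unfold th. auto. }
    assert (ES : rsum k (fun t => sin (th (Datatypes.S t + i))) = sin (th i) * C + cos (th i) * S).
    { unfold C, S. rewrite <- !rsum_scal, <- rsum_plus. apply rsum_ext. intros t _.
      rewrite th_add, sin_plus. unfold th. ring. }
    split.
    + rewrite (circ_sum (fun j => cos (th j))) by (auto; intros; rewrite th_per, cos_plus, cos_2PI, sin_2PI; ring).
      rewrite EC. field. lra.
    + rewrite (circ_sum (fun j => - sin (th j))) by (auto; intros; rewrite th_per, sin_plus, cos_2PI, sin_2PI; ring).
      rewrite rsum_opp, ES. field. lra.
Qed.

End Circ.

Lemma sin_sum k h : 2 * sin h * rsum k (fun t => sin (2 * INR (S t) * h)) = cos h - cos ((2 * INR k + 1) * h).
Proof.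
  induction k.
  - simpl. replace ((2 * 0 + 1) * h) with h by ring. ring.
  - change (rsum (S k) (fun t => sin (2 * INR (S t) * h))) with
      (rsum k (fun t => sin (2 * INR (S t) * h)) + sin (2 * INR (S k) * h)).
    rewrite Rmult_plus_distr_l, IHk.
    set (A := 2 * INR (S k) * h).
    replace ((2 * INR k + 1) * h) with (A - h) by (unfold A; rewrite S_INR; ring).
    replace ((2 * INR (S k) + 1) * h) with (A + h) by (unfold A; rewrite S_INR; ring).
    rewrite cos_minus, cos_plus. ring.
Qed.

Lemma lambda_val k : (1 <= k)%nat ->
  lambda_im k (2 * k + 1) = 1 / (2 * INR (2 * k + 1)) * cot (PI / (2 * INR (2 * k + 1))).
Proof.
  intros Hk. set (n := (2 * k + 1)%nat).
  assert (Hn : 3 <= INR n) by (replace 3 with (INR 3) by (simpl; ring); apply le_INR; unfold n; lia).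
  assert (HP := PI_RGT_0).
  set (g := PI / (2 * INR n)).
  assert (Hg0 : 0 < g) by (unfold g; apply Rdiv_lt_0_compat; lra).
  assert (Hg1 : g <= PI / 6).
  { unfold g. apply Rmult_le_compat_l; [lra|]. apply Rinv_le_contravar; lra. }
  assert (Sg : 0 < sin g) by (apply sin_gt_0; lra).
  assert (Cg : 0 < cos g) by (apply cos_gt_0; lra).
  unfold lambda_im. fold n.
  assert (E : rsum k (fun j => sin (2 * PI * INR (S j) / INR n)) = rsum k (fun t => sin (2 * INR (S t) * (2 * g)))).
  { apply rsum_ext. intros. f_equal. unfold g. field. lra. }
  rewrite E.
  assert (S2 : sin (2 * g) = 2 * sin g * cos g) by apply sin_2a.
  assert (C2 : cos (2 * g) = cos g * cos g - sin g * sin g) by apply cos_2a.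
  assert (Py := sin2_cos2 g). unfold Rsqr in Py.
  assert (SS := sin_sum k (2 * g)).
  assert (Epi : (2 * INR k + 1) * (2 * g) = PI).
  { unfold g, n. rewrite plus_INR, mult_INR. simpl (INR 2). simpl (INR 1). assert (0 <= INR k) by apply pos_INR. clear -H. field. lra. }
  rewrite Epi, cos_PI in SS.
  assert (Hs2 : 0 < sin (2 * g)) by (rewrite S2; nra).
  replace (rsum k (fun t => sin (2 * INR (S t) * (2 * g)))) with ((cos (2 * g) + 1) / (2 * sin (2 * g))).
  2:{ field_simplify_eq; [lra|lra]. }
  unfold cot. fold g. rewrite S2, C2. replace (cos g * cos g - sin g * sin g + 1) with (2 * cos g * cos g) by lra. field. split; lra.
Qed.

Theorem theorem10 (n : nat) (Hn : (3 <= n)%nat) (Hodd : Nat.Odd n) :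
  is_lub (Im_spectra n) (1 / (2 * INR n) * cot (PI / (2 * INR n))) /\
  lambda_im ((n - 1) / 2) n = 1 / (2 * INR n) * cot (PI / (2 * INR n)).
Proof.
  destruct Hodd as [k Hk]. subst n.
  assert (Hk1 : (1 <= k)%nat) by lia.
  assert (Hdiv : ((2 * k + 1 - 1) / 2 = k)%nat).
  { replace (2 * k + 1 - 1)%nat with (k * 2)%nat by lia. apply Nat.div_mul. lia. }
  rewrite Hdiv. split; [|apply lambda_val; auto].
  split.
  - intros t [M [a [HL HE]]]. apply (upper (2 * k + 1) ltac:(lia) M a t HL HE).
  - intros b Hb. apply Hb. rewrite <- lambda_val by auto.
    exists (Mc k), (/ INR (2 * k + 1) * (INR k - rsum k (fun t => cos (2 * PI * INR (S t) / INR (2 * k + 1))))).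
    split; [apply Mc_lap | apply Mc_eig]; auto.
Qed.
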